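(* Let $\mathcal F$ be a proper filter on $\omega$ and consider the game $\mathfrak G(\mathcal F,\omega,\mathcal F^+)$. Then (1) player I has a winning strategy if and only if $\mathcal F$ is not weakly Ramsey; (2) player II has a winning strategy if and only if $\mathcal F$ is $\omega$-$+$-diagonalizable.
   Context: A filter on $\omega$ is a family $\mathcal F\subseteq\mathcal P(\omega)$ closed under finite intersections and supersets and containing all cofinite sets; it is proper if all its members are infinite. $\mathcal F^+=\{X\subseteq\omega:\omega\setminus X\notin\mathcal F\}$. $X\subseteq^*Y$ means $X\setminus Y$ is finite. Game $\mathfrak G(\mathcal X,\omega,\mathcal Z)$: at each stage $k\in\omega$, player I chooses $X_k\in\mathcal X$ and player II responds with $n_k\in X_k$; II wins if $\{n_k:k\in\omega\}\in\mathcal Z$, otherwise I wins. A tree is a set $T$ of finite sequences of natural numbers containing the empty sequence and closed under initial segments; it is an $\mathcal F$-tree if for each $\bar s\in T$ there is $X_{\bar s}\in\mathcal F$ with $\bar s^\frown n\in T$ for all $n\in X_{\bar s}$. A branch is an infinite sequence all of whose finite initial segments lie in $T$; it is ''in'' a family if its set of values belongs to that family. $\mathcal F$ is weakly Ramsey if every $\mathcal F$-tree has a branch in $\mathcal F^+$. $\mathcal F$ is $\omega$-$+$-diagonalizable if there are $X_n\in\mathcal F^+$ ($n\in\omega$) such that for every $Y\in\mathcal F$ there is $n$ with $X_n\subseteq^*Y$. *)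

(* Defs.v *)
From Stdlib Require Import List Arith.
Import ListNotations.

Definition nset := nat -> Prop.
Definition family := nset -> Prop.

Definition finite_set (X : nset) : Prop := exists N, forall m, X m -> m < N.
Definition compl (X : nset) : nset := fun m => ~ X m.
Definition infinite_set (X : nset) : Prop := forall N, exists m, N <= m /\ X m.

Definition is_filter (F : family) : Prop :=
  (forall X Y, F X -> F Y -> F (fun m => X m /\ Y m)) /\
  (forall X Y, F X -> (forall m, X m -> Y m) -> F Y) /\
  (forall X, finite_set (compl X) -> F X).

Definition proper_filter (F : family) : Prop :=
  is_filter F /\ forall X, F X -> infinite_set X.

Definition Fplus (F : family) : family := fun X => ~ F (compl X).

Definition almost_sub (X Y : nset) : Prop :=
  finite_set (fun m => X m /\ ~ Y m).

Definition prefix {A} (f : nat -> A) (k : nat) : list A := map f (seq 0 k).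
Definition range (f : nat -> nat) : nset := fun m => exists k, f k = m.

(* Game G(Xf, omega, Z): I plays X_k in Xf, II answers n_k in X_k;
   II wins iff {n_k} in Z. A strategy for I maps the history of II's
   moves (which determines I's own previous moves) to I's next move. *)
Definition I_has_winning_strategy (Xf Z : family) : Prop :=
  exists sigma : list nat -> nset,
    (forall h, Xf (sigma h)) /\
    forall f : nat -> nat, (forall k, sigma (prefix f k) (f k)) -> ~ Z (range f).

(* A strategy for II maps the history of I's previous moves and I's current
   move to II's answer, which must be legal (an element of the current move). *)
Definition II_has_winning_strategy (Xf Z : family) : Prop :=
  exists tau : list nset -> nset -> nat,
    (forall h X, Forall Xf h -> Xf X -> X (tau h X)) /\
    forall Xs : nat -> nset, (forall k, Xf (Xs k)) ->
      Z (range (fun k => tau (prefix Xs k) (Xs k))).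

Definition is_tree (T : list nat -> Prop) : Prop :=
  T [] /\ forall s t, T (s ++ t) -> T s.

Definition is_F_tree (F : family) (T : list nat -> Prop) : Prop :=
  is_tree T /\ forall s, T s -> exists X, F X /\ forall n, X n -> T (s ++ [n]).

Definition is_branch (T : list nat -> Prop) (f : nat -> nat) : Prop :=
  forall k, T (prefix f k).

Definition weakly_Ramsey (F : family) : Prop :=
  forall T, is_F_tree F T -> exists f, is_branch T f /\ Fplus F (range f).

Definition omega_plus_diagonalizable (F : family) : Prop :=
  exists Xs : nat -> nset, (forall n, Fplus F (Xs n)) /\
    forall Y, F Y -> exists n, almost_sub (Xs n) Y.

(* Main.v *)
Require Import Defs.
From Stdlib Require Import List Arith Lia Cantor ClassicalEpsilon Classical.
Import ListNotations.

Lemma prefix_S {A} (f : nat -> A) k : prefix f (S k) = prefix f k ++ [f k].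
Proof. unfold prefix. rewrite seq_S, map_app. reflexivity. Qed.

Lemma prefix_length {A} (f : nat -> A) k : length (prefix f k) = k.
Proof. unfold prefix. rewrite length_map, length_seq. reflexivity. Qed.

Lemma full_in (F : family) : is_filter F -> F (fun _ => True).
Proof. intros [_ [_ H]]. apply H. exists 0. intros m Hm. exfalso. apply Hm. exact I. Qed.

Lemma firstn_app_small {A} i (s t : list A) : i <= length s -> firstn i (s ++ t) = firstn i s.
Proof. intros H. rewrite firstn_app. replace (i - length s) with 0 by lia. simpl. apply app_nil_r. Qed.

Section Part1.
Variable F : family.
Hypothesis HF : proper_filter F.

Lemma p1a : I_has_winning_strategy F (Fplus F) -> ~ weakly_Ramsey F.
Proof.
  intros [sigma [Hs Hw]] HR.
  set (T := fun s : list nat => forall i, i < length s -> sigma (firstn i s) (nth i s 0)).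
  assert (HT : is_F_tree F T).
  { split; [split|].
    - intros i Hi. simpl in Hi. lia.
    - intros s t Hst i Hi. specialize (Hst i). rewrite length_app in Hst.
      rewrite firstn_app_small in Hst by lia. rewrite app_nth1 in Hst by lia.
      apply Hst. lia.
    - intros s Hs0. exists (sigma s). split; [apply Hs|].
      intros n Hn i Hi. rewrite length_app in Hi. simpl in Hi.
      destruct (Nat.eq_dec i (length s)) as [->|Hne].
      + rewrite firstn_app_small by lia. rewrite firstn_all2 by lia.
        rewrite app_nth2 by lia. rewrite Nat.sub_diag. exact Hn.
      + rewrite firstn_app_small by lia. rewrite app_nth1 by lia. apply Hs0. lia. }
  destruct (HR T HT) as [f [Hb Hp]].
  apply (Hw f); [|exact Hp].
  intros k. specialize (Hb (S k) k). rewrite prefix_S in Hb.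
  rewrite firstn_app_small in Hb by (rewrite prefix_length; lia).
  rewrite firstn_all2 in Hb by (rewrite prefix_length; lia).
  rewrite app_nth2 in Hb by (rewrite prefix_length; lia).
  rewrite prefix_length, Nat.sub_diag in Hb. simpl in Hb.
  apply Hb. rewrite length_app, prefix_length. simpl. lia.
Qed.

Lemma p1b : ~ weakly_Ramsey F -> I_has_winning_strategy F (Fplus F).
Proof.
  intros HnR.
  apply not_all_ex_not in HnR. destruct HnR as [T HT].
  apply imply_to_and in HT. destruct HT as [HT Hn].
  assert (Hc : forall s, exists X, F X /\ (T s -> forall n, X n -> T (s ++ [n]))).
  { intros s. destruct (classic (T s)) as [Ts|Ts].
    - destruct (proj2 HT s Ts) as [X [HX1 HX2]]. exists X. auto.
    - exists (fun _ => True). split; [apply full_in, HF|]. intros; contradiction. }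
  exists (fun s => proj1_sig (constructive_indefinite_description _ (Hc s))).
  split.
  - intros h. exact (proj1 (proj2_sig (constructive_indefinite_description _ (Hc h)))).
  - intros f Hf Hp. apply Hn. exists f. split; [|exact Hp].
    intros k. induction k.
    + exact (proj1 (proj1 HT)).
    + rewrite prefix_S. specialize (Hf k).
      pose proof (proj2 (proj2_sig (constructive_indefinite_description _ (Hc (prefix f k))))) as HX.
      apply HX; assumption.
Qed.
End Part1.

Fixpoint dec_aux (fuel k : nat) : list nat :=
  match fuel, k with
  | S f, S k' => let (a, b) := of_nat k' in a :: dec_aux f b
  | _, _ => []
  end.

Fixpoint enc (l : list nat) : nat :=
  match l with [] => 0 | a :: l' => S (to_nat (a, enc l')) end.

Lemma dec_enc l : forall f, enc l <= f -> dec_aux f (enc l) = l.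
Proof.
  induction l as [|a l IH]; intros f Hf.
  - destruct f; reflexivity.
  - destruct f as [|f]; cbn [enc] in Hf; [lia|]. cbn [enc dec_aux].
    rewrite cancel_of_to. f_equal. apply IH.
    pose proof (to_nat_non_decreasing a (enc l)). lia.
Qed.

Lemma surj_list : forall s, exists n, dec_aux n n = s.
Proof. intros s. exists (enc s). apply dec_enc. lia. Qed.

Section Part2.
Variable F : family.
Hypothesis HF : proper_filter F.

Lemma fplus_meet X Y b : Fplus F X -> F Y -> exists m, b <= m /\ X m /\ Y m.
Proof.
  intros HX HY. apply NNPP. intros Hne. apply HX.
  destruct HF as [[Hi [Hu Hc]] _].
  apply (Hu (fun m => Y m /\ b <= m)).
  - apply Hi; [exact HY|]. apply Hc. exists b. intros m Hm. unfold compl in Hm. lia.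
  - intros m [Hm1 Hm2] Hm3. apply Hne. exists m. auto.
Qed.

Lemma p2b : omega_plus_diagonalizable F -> II_has_winning_strategy F (Fplus F).
Proof.
  intros [Xs [HX HD]].
  set (P := fun (h : list nset) (X : nset) m =>
        snd (of_nat (length h)) <= m /\ Xs (fst (of_nat (length h))) m /\ X m).
  exists (fun h X => epsilon (inhabits 0) (P h X)).
  assert (Hsp : forall h X, F X -> P h X (epsilon (inhabits 0) (P h X))).
  { intros h X HXF. apply epsilon_spec. unfold P. apply fplus_meet; auto. }
  split.
  - intros h X _ HXF. apply (Hsp h X HXF).
  - intros I HI HZ.
    destruct (HD _ HZ) as [n [N HN]].
    set (k := to_nat (n, N)).
    pose proof (Hsp (prefix I k) (I k) (HI k)) as Hk.
    set (v := epsilon (inhabits 0) (P (prefix I k) (I k))) in *.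
    assert (Hon : of_nat k = (n, N)) by apply cancel_of_to.
    unfold P in Hk. rewrite prefix_length, Hon in Hk. simpl in Hk. destruct Hk as [H1 [H2 _]].
    assert (Hr : ~ compl (range (fun k => epsilon (inhabits 0) (P (prefix I k) (I k)))) v).
    { intros Hc. apply Hc. exists k. reflexivity. }
    assert (Hlt := HN _ (conj H2 Hr)).
    lia.
Qed.

Lemma p2a : II_has_winning_strategy F (Fplus F) -> omega_plus_diagonalizable F.
Proof.
  intros [tau [Hleg Hwin]].
  set (A := fun (h : list nset) m => exists X, F X /\ tau h X = m).
  set (Xc := fun h m => epsilon (inhabits (fun _ : nat => True)) (fun X => F X /\ tau h X = m)).
  assert (HXc : forall h m, A h m -> F (Xc h m) /\ tau h (Xc h m) = m).
  { intros h m Hm. apply epsilon_spec. exact Hm. }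
  set (H := fun s : list nat => fold_left (fun h m => h ++ [Xc h m]) s []).
  assert (HH : forall s m, H (s ++ [m]) = H s ++ [Xc (H s) m]).
  { intros s m. unfold H. rewrite fold_left_app. reflexivity. }
  set (Xs := fun n m => Forall F (H (dec_aux n n)) -> A (H (dec_aux n n)) m).
  apply NNPP. intros Hnd.
  assert (HXs : forall n, Fplus F (Xs n)).
  { intros n HC. destruct (classic (Forall F (H (dec_aux n n)))) as [Hf|Hf].
    - set (h := H (dec_aux n n)) in *.
      pose proof (Hleg h _ Hf HC) as Hin. apply Hin. intros _. exists (compl (Xs n)).
      split; auto.
    - destruct HF as [_ Hinf]. destruct (Hinf _ HC 0) as [m [_ Hm]].
      apply Hm. intros Hf'. contradiction. }
  assert (HY : exists Y, F Y /\ forall n, ~ almost_sub (Xs n) Y).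
  { apply NNPP. intros Hno. apply Hnd. exists Xs. split; [exact HXs|].
    intros Y HYF. apply NNPP. intros Hn. apply Hno. exists Y. split; [exact HYF|].
    intros n Hs. apply Hn. exists n. exact Hs. }
  destruct HY as [Y [HYF HYn]].
  assert (Hstep : forall s, Forall F (H s) -> exists m, A (H s) m /\ ~ Y m).
  { intros s Hs. destruct (surj_list s) as [n Hn].
    apply NNPP. intros Hno. apply (HYn n). exists 0. intros m [Hm1 Hm2].
    exfalso. apply Hno. exists m. split; [|exact Hm2].
    unfold Xs in Hm1. rewrite Hn in Hm1. apply Hm1. exact Hs. }
  set (mm := fun h => epsilon (inhabits 0) (fun m => A h m /\ ~ Y m)).
  set (S := fix S k := match k with 0 => [] | Datatypes.S k' => S k' ++ [mm (H (S k'))] end).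
  assert (HS : forall k, S (Datatypes.S k) = S k ++ [mm (H (S k))]) by reflexivity.
  set (I := fun k => Xc (H (S k)) (mm (H (S k)))).
  assert (Hinv : forall k, Forall F (H (S k)) /\ prefix I k = H (S k)).
  { induction k as [|k [IH1 IH2]].
    - split; [constructor|reflexivity].
    - assert (Hm : A (H (S k)) (mm (H (S k))) /\ ~ Y (mm (H (S k)))).
      { apply epsilon_spec. apply Hstep. exact IH1. }
      destruct (HXc _ _ (proj1 Hm)) as [Hx1 Hx2].
      rewrite HS, HH, prefix_S, IH2. split; [|reflexivity].
      apply Forall_app. split; [exact IH1|]. constructor; [exact Hx1|constructor]. }
  assert (Hk : forall k, F (I k) /\ tau (prefix I k) (I k) = mm (H (S k)) /\ ~ Y (mm (H (S k)))).
  { intros k. destruct (Hinv k) as [H1 H2].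
    assert (Hm : A (H (S k)) (mm (H (S k))) /\ ~ Y (mm (H (S k)))).
    { apply epsilon_spec. apply Hstep. exact H1. }
    destruct (HXc _ _ (proj1 Hm)) as [Hx1 Hx2].
    rewrite H2. split; [exact Hx1|split; [exact Hx2|exact (proj2 Hm)]]. }
  apply (Hwin I (fun k => proj1 (Hk k))).
  destruct HF as [[_ [Hu _]] _]. apply (Hu _ _ HYF).
  intros m Hm [k Hk']. destruct (Hk k) as [_ [Ht Hn]]. apply Hn. rewrite <- Ht. exact (eq_ind _ (fun x => Y x) Hm _ (eq_sym Hk')).
Qed.
End Part2.

Theorem theorem2p7 (F : family) :
  proper_filter F ->
  (I_has_winning_strategy F (Fplus F) <-> ~ weakly_Ramsey F) /\
  (II_has_winning_strategy F (Fplus F) <-> omega_plus_diagonalizable F).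
Proof.
  intros HF. split; split.
  - apply p1a; exact HF.
  - apply p1b; exact HF.
  - apply p2a; exact HF.
  - apply p2b; exact HF.
Qed.
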